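(* Let $\Gamma=(V,E)$ be a connected $G$-locally arc-transitive graph (with $G\leqslant\mathrm{Aut}(\Gamma)$), let $\{\alpha,\beta\}\in E$ and let $N\unlhd G$. Suppose that $\gcd(|N_\alpha|,|\Gamma(\alpha)|)=1=\gcd(|N_\beta|,|\Gamma(\beta)|)$. Then $N$ is semiregular on $V$.
   Context: Graphs are finite, simple and undirected. $N_\gamma$ is the stabilizer in $N$ of a vertex $\gamma$ and $\Gamma(\gamma)$ its set of neighbours. $\Gamma$ is $G$-locally arc-transitive if for every vertex $\gamma$ the stabilizer $G_\gamma$ acts transitively on $\Gamma(\gamma)$. $N$ is semiregular on $V$ if $N_\gamma=1$ for all $\gamma\in V$. *)

(* Defs.v *)
From mathcomp Require Import all_boot all_fingroup.
Import GroupScope.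
Set Implicit Arguments. Unset Strict Implicit. Unset Printing Implicit Defensive.

Definition simple_graph (V : finType) (e : rel V) : Prop :=
  symmetric e /\ irreflexive e.

Definition nbhd (V : finType) (e : rel V) (x : V) : {set V} := [set y | e x y].

Definition connected_graph (V : finType) (e : rel V) : Prop :=
  forall x y : V, connect e x y.

Definition graph_aut_group (V : finType) (e : rel V) (G : {group {perm V}}) : Prop :=
  forall g, g \in G -> forall x y : V, e (g x) (g y) = e x y.

Definition locally_arc_transitive (V : finType) (e : rel V) (G : {group {perm V}}) : Prop :=
  forall x : V, [transitive 'C_G[x | 'P], on nbhd e x | 'P].

Definition semiregular (V : finType) (N : {group {perm V}}) : Prop :=
  forall x : V, 'C_N[x | 'P] = 1%g.

(* Main.v *)
Require Import Defs.
From mathcomp Require Import all_boot all_fingroup.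
Import GroupScope.
Set Implicit Arguments. Unset Strict Implicit. Unset Printing Implicit Defensive.

Lemma key (V : finType) (e : rel V) (G N : {group {perm V}}) (x y : V) :
  [transitive 'C_G[x | 'P], on nbhd e x | 'P] -> N <| G ->
  coprime #|'C_N[x | 'P]| #|nbhd e x| -> e x y ->
  'C_N[x | 'P] \subset 'C[y | 'P].
Proof.
move=> tr nNG cop exy.
set H := 'C_G[x | 'P]; set K := 'C_N[x | 'P].
have yA : y \in nbhd e x by rewrite inE.
set Hy := 'C_H[y | 'P].
have nKH : H \subset 'N(K).
  apply: normsI; first exact: subset_trans (subsetIl _ _) (normal_norm nNG).
  exact: subset_trans (subsetIr _ _) (normG _).
have sKH : K \subset H by apply: setSI; apply: normal_sub.
have nKHy : Hy \subset 'N(K) by apply: subset_trans (subsetIl _ _) nKH.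
have k1 : #|K : Hy| %| #|nbhd e x|.
  rewrite -(atransP tr _ yA) card_orbit -indexMg -norm_joinEl //.
  apply: indexSg; first exact: joing_subl.
  by rewrite join_subG subsetIl.
have k2 : #|K : Hy| %| #|K| by apply: dvdn_indexg.
have : #|K : Hy| == 1%N.
  by rewrite -dvdn1 -(eqnP cop) dvdn_gcd k2 k1.
rewrite indexg_eq1 => sKHy.
exact: subset_trans sKHy (subsetIr _ _).
Qed.

Lemma cnj (V : finType) (G N : {group {perm V}}) (x : V) (g : {perm V}) :
  N <| G -> g \in G -> 'C_N[g x | 'P] = 'C_N[x | 'P] :^ g.
Proof.
move=> nNG Gg.
by rewrite -[g x]apermE astab1_act -{1}((normsP (normal_norm nNG)) g Gg) -conjIg.
Qed.

Lemma nbcard (V : finType) (e : rel V) (G : {group {perm V}}) (x : V) (g : {perm V}) :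
  graph_aut_group e G -> g \in G -> #|nbhd e (g x)| = #|nbhd e x|.
Proof.
move=> aut Gg.
have -> : nbhd e (g x) = [set g z | z in nbhd e x].
  apply/setP=> z; rewrite inE; apply/idP/imsetP.
    by move=> h; exists ((g^-1)%g z); rewrite ?permKV // inE -(aut g Gg) permKV.
  by case=> w; rewrite inE => ew ->; rewrite aut.
by rewrite card_imset //; apply: perm_inj.
Qed.

Lemma step (V : finType) (e : rel V) (G : {group {perm V}}) (c d u v : V) :
  graph_aut_group e G -> locally_arc_transitive e G -> e c d ->
  u \in orbit 'P G c -> e u v -> v \in orbit 'P G d.
Proof.
move=> aut lat ecd /orbitP[g Gg <-] euv.
have dA : d \in nbhd e c by rewrite inE.
have : (g^-1)%g v \in nbhd e c by rewrite inE -(aut g Gg) permKV.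
rewrite -(atransP (lat c) _ dA) => /orbitP[h /setIP[Gh _] hd].
apply/orbitP; exists (h * g)%g; first by rewrite groupM.
have hd2 : h d = (g^-1)%g v := hd.
by rewrite /= apermE permM hd2 permKV.
Qed.

Theorem lemma2p4 (V : finType) (e : rel V) (G N : {group {perm V}}) (a b : V) :
  simple_graph e ->
  connected_graph e ->
  graph_aut_group e G ->
  locally_arc_transitive e G ->
  e a b ->
  N <| G ->
  coprime #|'C_N[a | 'P]| #|nbhd e a| ->
  coprime #|'C_N[b | 'P]| #|nbhd e b| ->
  semiregular N.
Proof.
move=> [sym irr] conn aut lat eab nNG copa copb.
have csym : connect_sym e by apply: sym_connect_sym.
have eba : e b a by rewrite sym.
pose S := [pred v | (v \in orbit 'P G a) || (v \in orbit 'P G b)].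
have clS : closed e S.
  apply: intro_closed => // u v euv; rewrite !inE => /orP[ua|ub].
    by rewrite (step aut lat eab ua euv) orbT.
  by rewrite (step aut lat eba ub euv).
have allS : forall v, v \in S.
  move=> v; rewrite -(closed_connect clS (conn a v)).
  by rewrite inE orbit_refl.
have cop : forall v, coprime #|'C_N[v | 'P]| #|nbhd e v|.
  move=> v; have := allS v; rewrite inE => /orP[|] /orbitP[g Gg <-];
    by rewrite /= ?apermE (cnj _ nNG Gg) cardJg (nbcard _ aut Gg).
move=> x.
pose P := [pred v | 'C_N[x | 'P] \subset 'C[v | 'P]].
have clP : closed e P.
  apply: intro_closed => // u v euv; rewrite !inE => Pu.
  apply: subset_trans (key (lat u) nNG (cop u) euv).
  by rewrite subsetI subsetIl.
have Pall : forall v, 'C_N[x | 'P] \subset 'C[v | 'P].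
  move=> v; have : x \in P by rewrite inE subsetIr.
  by rewrite (closed_connect clP (conn x v)).
apply/trivgP; apply/subsetP => z Hz; rewrite inE; apply/eqP/permP => v.
rewrite perm1; have /astab1P := subsetP (Pall v) z Hz.
by move=> h; apply: h.
Qed.
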